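(* Let $\beta,\varepsilon\in(0,1)$, let $(V,A,\succ)$ be an election with $n$ voters, and let $(x,y,p)$ be a LEO with total budget $B=1$ and income distribution a threshold distribution $\mathcal{I}^{\beta,\varepsilon}$. Let $C\subseteq A$. Then for every $a\in A\setminus C$, $$\big|\{v\in V: a\succ_v C\}\big|\le \frac{\beta n}{1-\varepsilon}+\big|\{v\in V: v \text{ is uncovered by } C\}\big|.$$
   Context: An election $(V,A,\succ)$: finite nonempty voter set $V$ with $n=|V|$, finite candidate set $A$, strict linear order $\succ_v$ on $A$ per voter; $a\succ_v C$ means $a\succ_v c$ for all $c\in C$. Extend $\succ_v$ to $A\cup\{\emptyset\}$ with $\emptyset$ strictly below all candidates; $a\succeq_v b$ means $a=b$ or $a\succ_v b$. Given prices $p_v\in[0,1]^{A\cup\{\emptyset\}}$ with $p_{v,\emptyset}=0$ and income $b\ge0$, voter $v$'s demand is the $\succ_v$-maximal element of $\{a\in A\cup\{\emptyset\}: p_{v,a}\le b\}$; the random demand $\mathcal{D}_v(p_v,\mathcal{I})$ is this demand with $b\sim\mathcal{I}$. A LEO $(x,y,p)$ with income $\mathcal{I}$ and budget $B>0$: prices $p_v\in[0,1]^{A\cup\{\emptyset\}}$ with $p_{v,\emptyset}=0$, consumptions $x_v\in[0,1]^{A\cup\{\emptyset\}}$, and $y\in[0,B]^A$, with (1) $x_{v,a}=\Pr[\mathcal{D}_v(p_v,\mathcal{I})=a]$; (2) $x_{v,a}\le y_a$ for $a\in A$, and $p_{v,a}=0$ whenever $x_{v,a}<y_a$; (3) $y$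 maximizes $\sum_{a}(\sum_v p_{v,a})z_a$ over $z\in\mathbb{R}^A_{\ge0}$ with $\sum_a z_a=B$. A threshold distribution $\mathcal{I}^{\beta,\varepsilon}$ is a distribution of a random variable $X$ supported on $[0,1]$ with continuous CDF, $\Pr[X\ge1-\varepsilon]=\beta$, and $\mathbb{E}[X]\le\beta$. Given the LEO, the boundary candidate of $v$ is $a_v=$ the $\succ_v$-maximal element of $\{a\in A\cup\{\emptyset\}: p_{v,a}\le1-\varepsilon\}$. Voter $v$ is covered by $C$ if some $c\in C$ satisfies $c\succeq_v a_v$, and uncovered otherwise. *)

(* Defs.v *)
From HB Require Import structures.
From mathcomp Require Import all_boot all_order all_algebra.
From mathcomp Require Import all_classical all_reals all_analysis.
Set Implicit Arguments. Unset Strict Implicit. Unset Printing Implicit Defensive.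
Import Order.TTheory GRing.Theory Num.Theory.
Local Open Scope ring_scope.
Local Open Scope classical_set_scope.

Definition strict_linear_order (A : finType) (pr : rel A) : Prop :=
  irreflexive pr /\ transitive pr /\ (forall a b, a != b -> pr a b || pr b a).

(* Extension of a preference to A ∪ {∅}, with ∅ = None strictly below all
   candidates. *)
Definition prefo (A : finType) (pr : rel A) (x y : option A) : bool :=
  match x, y with
  | Some a, Some b => pr a b
  | Some _, None => true
  | None, _ => false
  end.

Definition prefeqo (A : finType) (pr : rel A) (x y : option A) : bool :=
  (x == y) || prefo pr x y.

Definition is_max (A : finType) (pr : rel A) (S : pred (option A)) (d : option A) : bool :=
  S d && [forall o, (S o && (o != d)) ==> prefo pr d o].

Definition is_demand (R : realType) (A : finType) (pr : rel A)
  (pv : option A -> R) (b : R) (d : option A) : bool :=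
  is_max pr (fun o => pv o <= b) d.

(* Threshold distribution I^{beta,eps}: law P of a random variable X supported
   on [0,1], with continuous CDF (no atoms), Pr[X >= 1-eps] = beta, E[X] <= beta. *)
Definition threshold_distribution (R : realType) (P : probability R R) (beta eps : R) : Prop :=
  P [set` `[0%R, 1%R]] = 1%E /\
  (forall t : R, P [set t] = 0%E) /\
  P [set` `[(1 - eps)%R, +oo[] = beta%:E /\
  (\int[P]_x (x%:E) <= beta%:E)%E.

Definition LEO (R : realType) (V A : finType) (pref : V -> rel A)
  (P : probability R R) (B : R)
  (x : V -> option A -> R) (y : A -> R) (p : V -> option A -> R) : Prop :=
  (forall v o, 0 <= p v o <= 1) /\ (forall v, p v None = 0) /\
  (forall v o, 0 <= x v o <= 1) /\ (forall a, 0 <= y a <= B) /\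
  (forall v o, (x v o)%:E = P [set b | is_demand (pref v) (p v) b o]) /\
  (forall v a, x v (Some a) <= y a) /\
  (forall v a, x v (Some a) < y a -> p v (Some a) = 0) /\
  (\sum_a y a = B) /\
  (forall z : A -> R, (forall a, 0 <= z a) -> \sum_a z a = B ->
     \sum_a (\sum_v p v (Some a)) * z a <= \sum_a (\sum_v p v (Some a)) * y a).

Definition is_boundary (R : realType) (A : finType) (pr : rel A)
  (pv : option A -> R) (eps : R) (o : option A) : bool :=
  is_max pr (fun o' => pv o' <= 1 - eps) o.

Definition covered (R : realType) (A : finType) (pr : rel A)
  (pv : option A -> R) (eps : R) (C : {set A}) : bool :=
  [exists o, is_boundary pr pv eps o &&
     [exists c in C, prefeqo pr (Some c) o]].

(* Main.v *)
Require Import Defs.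
From HB Require Import structures.
From mathcomp Require Import all_boot all_order all_algebra.
From mathcomp Require Import all_classical all_reals all_analysis.
From mathcomp Require Import measurable_realfun.
Import Order.TTheory GRing.Theory Num.Theory.
Local Open Scope ring_scope.
Section aux.
Local Open Scope classical_set_scope.
Lemma meas_forall (R : realType) (I : finType) (F : I -> R -> bool) :
  (forall i, measurable_fun setT (F i)) ->
  measurable_fun setT (fun b => [forall i, F i b]).
Proof.
move=> mF.
have -> : (fun b => [forall i, F i b]) = (fun b => \big[andb/true]_(i | true) F i b).
  by apply/funext => b; rewrite big_andE; apply: eq_forallb => i.
elim: (index_enum I) => [|h t IH].
  by under eq_fun do rewrite big_nil; exact: measurable_cst.
by under eq_fun do rewrite big_cons; exact: measurable_and.
Qed.

Lemma demand_meas (R : realType) (A : finType) (pr : rel A) (pv : option A -> R) o :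
  measurable [set b : R | is_demand pr pv b o].
Proof.
have mf : measurable_fun setT (fun b : R => is_demand pr pv b o).
  rewrite /is_demand /is_max; apply: measurable_and.
    exact: measurable_fun_ler.
  apply: meas_forall => o'.
  under eq_fun do rewrite implybE.
  apply: measurable_or => //; apply: measurable_neg; apply: measurable_and => //.
  exact: measurable_fun_ler.
have := mf measurableT [set true] I.
by rewrite setTI preimage_true.
Qed.

Lemma demand_uniq (R : realType) (A : finType) (pr : rel A) (pv : option A -> R) b d1 d2 :
  strict_linear_order pr -> is_demand pr pv b d1 -> is_demand pr pv b d2 -> d1 = d2.
Proof.
move=> [irr [tr _]] /andP[s1 /forallP f1] /andP[s2 /forallP f2].
apply/eqP/negPn/negP => ne.
have := f1 d2; rewrite s2 eq_sym ne /= => p12.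
have := f2 d1; rewrite s1 ne /= => p21.
move: ne p12 p21; clear s1 s2 f1 f2; case: d1 d2 => [a1|] [a2|] //= _ p12 p21.
by have := tr _ _ _ p12 p21; rewrite irr.
Qed.
Lemma demand_bound (R : realType) (A : finType) (pr : rel A) (P : probability R R)
  (beta : R) (pv xv : option A -> R) :
  strict_linear_order pr -> (forall o, 0 <= pv o) ->
  P [set` `[0%R, 1%R]] = 1%E -> (\int[P]_x (x%:E) <= beta%:E)%E ->
  (forall o, (xv o)%:E = P [set b | is_demand pr pv b o]) ->
  \sum_o pv o * xv o <= beta.
Proof.
move=> hpr pv0 P01 Pint hx.
rewrite set_mem_set in P01.
set D := fun o => [set b : R | is_demand pr pv b o].
have mD : forall o, measurable (D o) by move=> o; exact: demand_meas.
rewrite -lee_fin; apply: le_trans Pint.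
have -> : ((\sum_o pv o * xv o)%:E = \sum_o \int[P]_x (pv o * \1_(D o) x)%:E)%E.
  rewrite -sumEFin; apply: eq_bigr => o _.
  rewrite (@integralZl_indic _ _ _ _ _ measurableT (fun _ => D o)) //.
    by rewrite integral_indic // setIT EFinM hx.
  by move=> /lt_le_trans /(_ (pv0 o)); rewrite ltxx.
have mf : forall o, measurable_fun setT (fun x => (pv o * \1_(D o) x)%:E).
  move=> o; apply/measurable_EFinP; by apply: measurable_funM => //; exact: measurable_indic.
have f0 : forall o x, setT x -> (0 <= (pv o * \1_(D o) x)%:E)%E.
  by move=> o x _; rewrite lee_fin mulr_ge0 // indicE.
rewrite -ge0_integral_sum //.
apply: (@le_trans _ _ (\int[P]_x (Num.max x 0)%:E)%E).
  apply: ge0_le_integral => //.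
  - by move=> x _; apply: sume_ge0 => o _; rewrite lee_fin mulr_ge0 // indicE.
  - exact: emeasurable_sum.
  - apply/measurable_EFinP; apply: measurable_maxr => //.
  - move=> b _; rewrite sumEFin lee_fin.
    case: (pickP (fun o => is_demand pr pv b o)) => [d hd | hn].
      rewrite (bigD1 d) //= big1 => [|o hod].
        rewrite indicE mem_set // mulr1 addr0.
        by case/andP: hd => hb _; rewrite le_max hb.
      rewrite indicE memNset ?mulr0 // => ho.
      by move: hod; rewrite (@demand_uniq _ _ pr pv b o d hpr ho hd) eqxx.
    rewrite big1 ?le_max ?lexx ?orbT // => o _.
    by rewrite indicE memNset ?mulr0 //= /D /= hn.
rewrite le_eqVlt; apply/orP; left; apply/eqP; apply: ae_eq_integral => //.
- apply/measurable_EFinP; apply: measurable_maxr => //.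
have hC : P (~` `[0%R, 1%R]) = 0%E.
  have gen : forall S, measurable S -> P S = 1%E -> P (~` S) = 0%E.
    by move=> S mS h; rewrite probability_setC // h subee.
  by apply: gen => //; exact: measurable_itv.
exists `]-oo, 0[%classic; split => //.
  apply/eqP; rewrite eq_le measure_ge0 andbT -hC; apply: le_measure; rewrite ?inE //.
    exact: measurableC.
  move=> x /=; rewrite !in_itv /= => hx0 /andP[hx1 _].
  by move: (lt_le_trans hx0 hx1); rewrite ltxx.
move=> x /= hx'; apply: contrapT => hneg; apply: hx' => _.
have hx0 : (0 <= x)%R.
  rewrite leNgt; apply/negP => h; apply: hneg.
  by rewrite /= in_itv /= h.
by congr EFin; apply/max_idPl.
Qed.
Lemma sum_option (R : realType) (A : finType) (F : option A -> R) :
  F None = 0 -> \sum_o F o = \sum_a F (Some a).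
Proof.
move=> F0; rewrite (bigD1 None) //= F0 add0r.
rewrite (@reindex_omap _ _ _ _ _ Some id) //=; last by case.
by apply: eq_bigl => a; rewrite eqxx.
Qed.

Lemma covered_price (R : realType) (A : finType) (pr : rel A) (pv : option A -> R)
  (eps : R) (C : {set A}) (a : A) :
  strict_linear_order pr -> a \notin C -> [forall c in C, pr a c] ->
  covered pr pv eps C -> 1 - eps < pv (Some a).
Proof.
move=> [irr [tr _]] aC /forall_inP aP.
case/existsP => o /andP[hb /exists_inP[c cC hc]].
case/andP: hb => ho /forallP hmax.
rewrite ltNge; apply/negP => hpa.
have pac := aP c cC.
have hoa : o != Some a.
  apply/negP => /eqP eo; move: hc; rewrite eo /prefeqo /= => /orP[/eqP [ec]|pca].
    by move: cC; rewrite ec (negbTE aC).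
  by have := tr _ _ _ pac pca; rewrite irr.
have := hmax (Some a); rewrite hpa eq_sym hoa /=.
clear ho hmax hoa; case: o hc => [b|] //= hc poa.
move: hc; rewrite /prefeqo /= => /orP[/eqP [ec]|pco].
  by subst b; have := tr _ _ _ pac poa; rewrite irr.
by have := tr _ _ _ pco poa => pca; have := tr _ _ _ pac pca; rewrite irr.
Qed.
End aux.
Theorem mainTheorem8 (R : realType) (V A : finType) (pref : V -> rel A)
  (beta eps : R) (P : probability R R)
  (x : V -> option A -> R) (y : A -> R) (p : V -> option A -> R)
  (C : {set A}) (a : A) :
  0 < beta < 1 -> 0 < eps < 1 ->
  (0 < #|V|)%N ->
  (forall v, strict_linear_order (pref v)) ->
  threshold_distribution P beta eps ->
  LEO pref P 1 x y p ->
  a \notin C ->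
  (#|[set v | [forall c in C, pref v a c]]|%:R : R)
    <= beta * #|V|%:R / (1 - eps)
       + #|[set v | ~~ covered (pref v) (p v) eps C]|%:R.
Proof.
move=> /andP[b0 b1] /andP[e0 e1] _ hpr [P01 [_ [_ Pint]]]
  [p01 [pN [x01 [y01 [hx [hxy [hp0 [hysum hopt]]]]]]]] aC.
pose pi := fun a' => \sum_v p v (Some a').
have hdem : forall v, \sum_o p v o * x v o <= beta.
  move=> v; apply: (@demand_bound _ _ (pref v) P _ (p v) (x v)) => //.
  by move=> o; case/andP: (p01 v o).
have hpia : pi a <= \sum_a' pi a' * y a'.
  have h1 : \sum_a0 (\sum_v p v (Some a0)) * ((a0 == a)%:R : R) = pi a.
    rewrite (bigD1 a) //= eqxx mulr1 [X in _ + X]big1 ?addr0 // => a0 /negbTE ->.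
    by rewrite mulr0.
  rewrite -h1; apply: hopt.
    by move=> a'; rewrite ler0n.
  by rewrite (bigD1 a) //= eqxx big1 ?addr0 // => a' /negbTE ->.
have hsum : \sum_a' pi a' * y a' <= #|V|%:R * beta.
  have -> : \sum_a' pi a' * y a' = \sum_v \sum_a' p v (Some a') * x v (Some a').
    rewrite exchange_big /=; apply: eq_bigr => a' _.
    rewrite /pi mulr_suml; apply: eq_bigr => v _.
    have := hxy v a'; rewrite le_eqVlt => /orP[/eqP -> //|hlt].
    by rewrite (hp0 _ _ hlt) !mul0r.
  rewrite -sum1_card natr_sum mulr_suml; apply: ler_sum => v _.
  rewrite mul1r -(@sum_option _ _ (fun o => p v o * x v o)); first exact: hdem.
  by rewrite pN mul0r.
set S := [set v | [forall c in C, pref v a c]].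
set U := [set v | ~~ covered (pref v) (p v) eps C].
set T := [set v in S | covered (pref v) (p v) eps C].
have hST : S \subset T :|: U.
  apply/fintype.subsetP => v vS; rewrite !inE in vS *; rewrite vS /=.
  by case: (covered _ _ _ _).
have hT : (1 - eps) * #|T|%:R <= beta * #|V|%:R.
  apply: (le_trans _ (le_trans hpia (le_trans hsum _))); last by rewrite mulrC.
  rewrite /pi -sum1_card natr_sum mulr_sumr.
  apply: (@le_trans _ _ (\sum_(v in T) p v (Some a))).
    apply: ler_sum => v; rewrite !inE => /andP[vS vC]; rewrite mulr1.
    by apply/ltW; apply: (@covered_price _ _ (pref v) (p v) eps C a).
  rewrite [X in _ <= X](bigID (mem T)) /= lerDl.
  by apply: sumr_ge0 => v _; case/andP: (p01 v (Some a)).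
have hcard : (#|S| <= #|T| + #|U|)%N.
  apply: (leq_trans (subset_leq_card hST)); exact: leq_card_setU.
have e1' : 0 < 1 - eps by rewrite subr_gt0.
apply: (@le_trans _ _ (#|T|%:R + #|U|%:R)).
  by rewrite -natrD ler_nat.
rewrite lerD2r ler_pdivlMr // mulrC.
exact: hT.
Qed.
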